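(* Let $k\ge2$ and let $G=(\{a,b\},\varphi,a)$ be a circular D0L-system with $\varphi$ $k$-uniform. Then the graph of overhangs $GO_G$ does not contain two distinct vertices $s_1,s_2$, each carrying a loop, together with an edge from $s_1$ to $s_2$.
   Context: A D0L-system $G=(\mathcal{A},\varphi,w)$ has $L(G)=\{\varphi^n(w)\}$ and $S(L(G))$ the set of factors of its words. An interpretation of $u\in S(L(G))$ is $(p,v,s)$ with $v\in S(L(G))$, $\varphi(v)=pus$. With $v=v_1\cdots v_n$, $v'=v'_1\cdots v'_m$, $u=u_1\cdots u_\ell$, interpretations $(p,v,s),(p',v',s')$ are synchronized at position $j$ if $\varphi(v_1\cdots v_i)=pu_1\cdots u_j$ and $\varphi(v'_1\cdots v'_{i'})=p'u_1\cdots u_j$ for some $i,i'$; $u$ has a synchronizing point at $j$ if all its interpretations are pairwise synchronized at $j$. A PD0L-system injective on $S(L(G))$ is circular if there is $Z$ such that every $u\in S(L(G))$ with $|u|>Z$ has a synchronizing point. $\varphi$ is $k$-uniform if $|\varphi(a)|=|\varphi(b)|=k$. Let $X=\{\varphi(a),\varphi(b)\}$. An overhang is a triple $(u_1\cdots u_m,v_1\cdots v_n,|x|)$ with $u_i,v_j\in X$, $x$ nonempty, such that: (i) $x$ is a suffix of $u_1\cdots u_m$ but not of $u_2\cdots u_m$; (ii) $x$ is a prefix of $v_1\cdots v_n$ but not of $v_1\cdots v_{n-1}$; (iii) $x\ne u_1\cdots u_m$ or $x\ne v_1\cdots v_n$; (iv) $|v_1\cdots v_{n-1}|<|x(u_2\cdots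 u_m)^{-1}|$. Its left overhang is $u_1\cdots u_mx^{-1}$, right overhang $x^{-1}v_1\cdots v_n$. $GO_G$ has an edge from $s_1$ to $s_2$ labelled by each overhang with left overhang $s_1$ and right overhang $s_2$. *)

(* Defs.v *)
From mathcomp Require Import all_boot.
Set Implicit Arguments. Unset Strict Implicit. Unset Printing Implicit Defensive.

Definition word := seq bool.
Definition la : bool := false.
Definition lb : bool := true.

Definition phiw (phi : bool -> word) (w : word) : word := flatten (map phi w).

Definition factor (phi : bool -> word) (w0 u : word) : Prop :=
  exists n, infix u (iter n (phiw phi) w0).

Definition interp (phi : bool -> word) (w0 u p v s : word) : Prop :=
  factor phi w0 v /\ phiw phi v = p ++ u ++ s.

Definition sync_at (phi : bool -> word) (u : word) (j : nat)
  (p v p' v' : word) : Prop :=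
  exists i i', i <= size v /\ i' <= size v' /\
    phiw phi (take i v) = p ++ take j u /\
    phiw phi (take i' v') = p' ++ take j u.

Definition has_sync_point (phi : bool -> word) (w0 u : word) : Prop :=
  exists j, j <= size u /\
    forall p v s p' v' s',
      interp phi w0 u p v s -> interp phi w0 u p' v' s' ->
      sync_at phi u j p v p' v'.

Definition circular (phi : bool -> word) (w0 : word) : Prop :=
  (forall c, phi c <> [::]) /\
  (forall v w, factor phi w0 v -> factor phi w0 w -> phiw phi v = phiw phi w -> v = w) /\
  (exists Z : nat, forall u, factor phi w0 u -> Z < size u -> has_sync_point phi w0 u).

Definition k_uniform (phi : bool -> word) (k : nat) : Prop :=
  size (phi la) = k /\ size (phi lb) = k.

Definition inX (phi : bool -> word) (w : word) : Prop := w = phi la \/ w = phi lb.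

(* (u_1...u_m, v_1...v_n, l) is an overhang, with us = [u_1;...;u_m],
   vs = [v_1;...;v_n] and l = |x| *)
Definition overhang (phi : bool -> word) (us vs : seq word) (l : nat) : Prop :=
  (forall w, w \in us -> inX phi w) /\
  (forall w, w \in vs -> inX phi w) /\
  exists x : word,
    size x = l /\ x <> [::] /\
    suffix x (flatten us) /\ ~~ suffix x (flatten (behead us)) /\
    prefix x (flatten vs) /\ ~~ prefix x (flatten (take (size vs).-1 vs)) /\
    (x <> flatten us \/ x <> flatten vs) /\
    size (flatten (take (size vs).-1 vs)) < size x - size (flatten (behead us)).

(* left overhang u_1...u_m x^{-1} and right overhang x^{-1} v_1...v_n *)
Definition left_overhang (us : seq word) (l : nat) : word :=
  take (size (flatten us) - l) (flatten us).
Definition right_overhang (vs : seq word) (l : nat) : word :=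
  drop l (flatten vs).

Definition GO_edge (phi : bool -> word) (s1 s2 : word) : Prop :=
  exists us vs l, overhang phi us vs l /\
    left_overhang us l = s1 /\ right_overhang vs l = s2.

(* Main.v *)
Require Import Defs.
From mathcomp Require Import all_boot.
From mathcomp Require Import zify.
Set Implicit Arguments. Unset Strict Implicit. Unset Printing Implicit Defensive.

Lemma size_flat (phi : bool -> word) k (ws : seq word) :
  k_uniform phi k -> (forall w, w \in ws -> inX phi w) ->
  size (flatten ws) = k * size ws.
Proof.
move=> [Ha Hb]; elim: ws => [|w ws IH] H /=; first by rewrite muln0.
rewrite size_cat IH; last by move=> z Hz; apply: H; rewrite in_cons Hz orbT.
have [->|->] := H w (mem_head _ _); rewrite ?Ha ?Hb mulnS //.
Qed.

Lemma edge_inv phi k s s' : 2 <= k -> k_uniform phi k -> GO_edge phi s s' ->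
  exists c d x, phi c = s ++ x /\ phi d = x ++ s' /\ 0 < size x.
Proof.
move=> Hk Hu [us [vs [l [[Hus [Hvs Hx]] [Hs Hs2]]]]].
move: Hx => [x [Hl [Hx0 [Hsuf [_ [Hpre [_ [_ Hiv]]]]]]]].
have Sus := size_flat Hu Hus.
have Svs := size_flat Hu Hvs.
have Sb : size (flatten (behead us)) = k * (size us).-1.
  rewrite (size_flat Hu) ?size_behead // => w Hw; apply Hus.
  by case: us {Sus Hsuf Hs Hiv} Hw Hus =>  //= a us0 Hw0 _; rewrite in_cons Hw0 orbT.
have St : size (flatten (take (size vs).-1 vs)) = k * (size vs).-1.
  rewrite (size_flat Hu); last by move=> w Hw; apply: Hvs; apply: mem_take Hw.
  by rewrite size_take; case: (size vs) => //= n; rewrite ltnSn.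
have L1 : size x <= k * size us by rewrite -Sus; exact: size_suffix Hsuf.
have L2 : size x <= k * size vs by rewrite -Svs; exact: size_prefix Hpre.
rewrite Sb St in Hiv.
have Hx : 0 < size x by case: x Hx0 {Hl Hsuf Hpre L1 L2 Hiv} => //.
have aux : forall j, k * j < k -> j = 0.
  by case=> // j; rewrite mulnS; lia.
have Em : size us = 1.
  move: L1 L2 Hiv; case: (size us) => [|m]; first lia.
  case: (size vs) => [|n]; first lia.
  rewrite !mulnS /= => L1 L2 Hiv.
  have -> : m = 0 by apply: aux; lia.
  by [].
have En : size vs = 1.
  move: L1 L2 Hiv; case: (size us) => [|m]; first lia.
  case: (size vs) => [|n]; first lia.
  rewrite !mulnS /= => L1 L2 Hiv.
  have -> : n = 0 by apply: aux; lia.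
  by [].
case: us Hus Em Hsuf Hs {Sus Sb Hiv L1} => [|u [|]] //= Hus _.
case: vs Hvs En Hpre Hs2 {Svs St L2} => [|v [|]] //= Hvs _.
rewrite !cats0 /left_overhang /right_overhang /= !cats0.
move=> /prefixP [w' Ev] <- /suffixP [w Eu] <-.
have [cu Ecu] : exists c, phi c = u.
  by have [->|->] := Hus u (mem_head _ _); [exists la|exists lb].
have [cv Ecv] : exists c, phi c = v.
  by have [->|->] := Hvs v (mem_head _ _); [exists la|exists lb].
exists cu, cv, x; split; last split => //.
  by rewrite Ecu Eu size_cat -Hl addnK take_size_cat.
by rewrite Ecv Ev -Hl drop_size_cat.
Qed.

Lemma catl (s x s' x' : word) : s ++ x = s' ++ x' -> size s = size s' -> s = s' /\ x = x'.
Proof. by move=> E Hs; move/eqP: E; rewrite eqseq_cat // => /andP [/eqP -> /eqP ->]. Qed.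

Lemma catr (s x s' x' : word) : x ++ s = x' ++ s' -> size x = size x' -> s = s' /\ x = x'.
Proof. by move=> E Hs; move/eqP: E; rewrite eqseq_cat // => /andP [/eqP -> /eqP ->]. Qed.

Lemma comm_nth (s x : word) : s ++ x = x ++ s -> 0 < size x ->
  forall i, i < size s -> nth false s i = nth false x (i %% size x).
Proof.
move=> E Hx; elim/ltn_ind=> i IH Hi.
have := congr1 (fun w => nth false w i) E; rewrite /= nth_cat Hi nth_cat.
case: ltnP => Hix; first by rewrite modn_small.
move=> ->; rewrite IH; [|lia|lia].
by rewrite -{2}(subnK Hix) modnDr.
Qed.

Lemma comm_eq (s s' x : word) : s ++ x = x ++ s -> s' ++ x = x ++ s' -> 0 < size x ->
  size s = size s' -> s = s'.
Proof.
move=> E E' Hx Hs; apply: (eq_from_nth (x0 := false)) => // i Hi.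
by rewrite (comm_nth E) // (comm_nth E') // -Hs.
Qed.

Theorem mainTheorem8 (k : nat) (phi : bool -> word) :
  2 <= k -> k_uniform phi k -> circular phi [:: la] ->
  ~ (exists s1 s2 : word, s1 <> s2 /\
       GO_edge phi s1 s1 /\ GO_edge phi s2 s2 /\ GO_edge phi s1 s2).
Proof.
move=> Hk Hu _ [s1 [s2 [Hne [E1 [E2 E3]]]]].
have [c1 [d1 [x1 [U1 [V1 X1]]]]] := edge_inv Hk Hu E1.
have [c2 [d2 [x2 [U2 [V2 X2]]]]] := edge_inv Hk Hu E2.
have [c3 [d3 [x3 [U3 [V3 X3]]]]] := edge_inv Hk Hu E3.
have Sz : forall c, size (phi c) = k by case; case: Hu.
have := Sz c1; rewrite U1 size_cat => Z1.
have := Sz d1; rewrite V1 size_cat => Z1'.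
have := Sz c2; rewrite U2 size_cat => Z2.
have := Sz d2; rewrite V2 size_cat => Z2'.
have := Sz c3; rewrite U3 size_cat => Z3.
have := Sz d3; rewrite V3 size_cat => Z3'.
have c12 : c1 != c2.
  apply/eqP => e; apply: Hne; rewrite e U2 in U1.
  by have [] := catl U1 ltac:(lia).
have d12 : d1 != d2.
  apply/eqP => e; apply: Hne; rewrite e V2 in V1.
  by have [] := catr V1 ltac:(lia).
have ec3 : c3 = c1.
  have : c3 = c1 \/ c3 = c2 by move: c12; case: (c1); case: (c2); case: (c3); auto.
  case=> // e; exfalso; apply: Hne; rewrite e U2 in U3.
  by have [] := catl U3 ltac:(lia).
have ed3 : d3 = d2.
  have : d3 = d1 \/ d3 = d2 by move: d12; case: (d1); case: (d2); case: (d3); auto.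
  case=> // e; exfalso; apply: Hne; rewrite e V1 in V3.
  by have [] := catr V3 ltac:(lia).
rewrite ec3 U1 in U3; have [_ ex13] := catl U3 ltac:(lia).
rewrite ed3 V2 in V3; have [_ ex23] := catr V3 ltac:(lia).
subst x1 x2.
have : (d1 = c1 /\ d2 = c2) \/ (d1 = c2 /\ d2 = c1).
  by move: c12 d12; case: (c1); case: (c2); case: (d1); case: (d2); auto.
case=> [[ea eb]|[ea eb]].
- rewrite ea U1 in V1; rewrite eb U2 in V2.
  by apply: Hne; apply: (comm_eq V1 V2) => //; lia.
- rewrite ea U2 in V1; rewrite eb U1 in V2.
  apply: Hne; apply: (comm_eq (x := x3 ++ x3)); rewrite ?size_cat; try lia.
  + by rewrite catA V2 -catA V1 catA.
  + by rewrite catA V1 -catA V2 catA.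
Qed.
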